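(* Let $ABC$ be a nondegenerate triangle, let $P$ be a point not lying on any of the lines $BC$, $CA$, $AB$, and let $XYZ$ be a (nondegenerate) Miquel triangle of $P$ relative to $ABC$. (i) If $P$ lies in the interior of triangle $ABC$, then $P$ lies in the interior of triangle $XYZ$. (ii) If $P$ lies in the exterior of triangle $ABC$, then $P$ lies in the exterior of triangle $XYZ$.
   Context: Miquel triangle: given a triangle $ABC$ and a point $P$ not on the lines $BC,CA,AB$, a triangle $XYZ$ with $X$ on line $BC$, $Y$ on line $CA$, $Z$ on line $AB$ is called a Miquel triangle of $P$ relative to $ABC$ if $P$ lies on each of the three circles through $A,Y,Z$, through $B,Z,X$, and through $C,X,Y$ (the Miquel circles). The pedal triangle of $P$ is one such triangle, and all Miquel triangles of a fixed $P$ are similar to each other. *)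

(* Defs.v *)
From Stdlib Require Import Reals.
Open Scope R_scope.

Definition point : Type := (R * R)%type.

(* twice the signed area of triangle ABC *)
Definition cross (A B C : point) : R :=
  (fst B - fst A) * (snd C - snd A) - (snd B - snd A) * (fst C - fst A).

Definition collinear (A B C : point) : Prop := cross A B C = 0.

Definition on_line (B C X : point) : Prop := collinear B C X.

Definition dist2 (P Q : point) : R :=
  (fst P - fst Q) ^ 2 + (snd P - snd Q) ^ 2.

Definition on_circle_through (U V W P : point) : Prop :=
  ~ collinear U V W /\
  exists O : point,
    dist2 O U = dist2 O V /\ dist2 O U = dist2 O W /\ dist2 O U = dist2 O P.

Definition miquel_triangle (A B C P X Y Z : point) : Prop :=
  on_line B C X /\ on_line C A Y /\ on_line A B Z /\
  on_circle_through A Y Z P /\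
  on_circle_through B Z X P /\
  on_circle_through C X Y P.

Definition in_interior (A B C P : point) : Prop :=
  exists a b c : R, 0 < a /\ 0 < b /\ 0 < c /\ a + b + c = 1 /\
    fst P = a * fst A + b * fst B + c * fst C /\
    snd P = a * snd A + b * snd B + c * snd C.

Definition in_closed_triangle (A B C P : point) : Prop :=
  exists a b c : R, 0 <= a /\ 0 <= b /\ 0 <= c /\ a + b + c = 1 /\
    fst P = a * fst A + b * fst B + c * fst C /\
    snd P = a * snd A + b * snd B + c * snd C.

Definition in_exterior (A B C P : point) : Prop := ~ in_closed_triangle A B C P.

(* Main.v *)
Require Import Defs.
From Stdlib Require Import Reals.
From Stdlib Require Import Lra Psatz.
Open Scope R_scope.

Lemma sq_pos x : x <> 0 -> 0 < x^2.
Proof. intros; replace (x^2) with (x*x) by ring; apply Rsqr_pos_lt; auto. Qed.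
Lemma sq_nn x : 0 <= x^2.
Proof. replace (x^2) with (x*x) by ring; apply Rle_0_sqr. Qed.

Lemma core (u1 u2 v1 v2 a1 a2 b1 b2 : R) :
  (u1*a1+u2*a2)*(b1*v2-b2*v1) - (a1*u2-a2*u1)*(v1*b1+v2*b2) = 0 ->
  a1*u2-a2*u1 <> 0 -> b1*v2-b2*v1 <> 0 -> a1*b2-a2*b1 <> 0 ->
  0 < (u1*v2-u2*v1)*(a1*b2-a2*b1)*(a1*u2-a2*u1)*(b1*v2-b2*v1).
Proof.
  intros K Ha Hb HS.
  set (qa1 := u1*a1+u2*a2) in *. set (qa2 := a1*u2-a2*u1) in *.
  set (qb1 := v1*b1+v2*b2) in *. set (qb2 := b1*v2-b2*v1) in *.
  set (S := a1*b2-a2*b1) in *. set (c := u1*v2-u2*v1).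
  set (D := qa1*qb1+qa2*qb2).
  assert (N : 0 < (a1^2+a2^2)*(b1^2+b2^2)).
  { assert (a1^2+a2^2 <> 0). { intro h. apply HS. unfold S.
      assert (a1 = 0) by nra. assert (a2 = 0) by nra. subst. ring. }
    assert (b1^2+b2^2 <> 0). { intro h. apply HS. unfold S.
      assert (b1 = 0) by nra. assert (b2 = 0) by nra. subst. ring. }
    apply Rmult_lt_0_compat; nra. }
  assert (I1 : c*((a1^2+a2^2)*(b1^2+b2^2)) = D*S + (qa1*qb2-qa2*qb1)*(a1*b1+a2*b2)).
  { unfold c, D, S, qa1, qa2, qb1, qb2. ring. }
  rewrite K in I1.
  assert (I2 : D*qa2*qb2 = qa2^2*(qb1^2+qb2^2) + qa2*qb1*(qa1*qb2-qa2*qb1)).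
  { unfold D. ring. }
  rewrite K in I2.
  assert (P1 : 0 < qa2^2*(qb1^2+qb2^2)*S^2).
  { assert (0 < qa2^2) by (apply sq_pos; auto).
    assert (0 < qb2^2) by (apply sq_pos; auto).
    assert (0 < S^2) by (apply sq_pos; auto).
    assert (0 <= qb1^2) by (apply sq_nn).
    apply Rmult_lt_0_compat; [apply Rmult_lt_0_compat|]; lra. }
  assert (E : c*S*qa2*qb2*((a1^2+a2^2)*(b1^2+b2^2)) = qa2^2*(qb1^2+qb2^2)*S^2).
  { transitivity ((c*((a1^2+a2^2)*(b1^2+b2^2)))*S*qa2*qb2). ring.
    rewrite I1. transitivity (D*qa2*qb2*S^2). ring. rewrite I2. ring. }
  rewrite <- E in P1.
  destruct (Rlt_le_dec 0 (c*S*qa2*qb2)) as [h|h]; auto.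
  exfalso. nra.
Qed.

Lemma par e1 e2 d1 d2 : e1*d2 - e2*d1 = 0 -> ~(d1 = 0 /\ d2 = 0) ->
  exists m, e1 = m*d1 /\ e2 = m*d2.
Proof.
  intros H H0.
  assert (N : d1*d1+d2*d2 <> 0). { intro h. apply H0. split; nra. }
  exists ((e1*d1+e2*d2)/(d1*d1+d2*d2)). split.
  - apply Rmult_eq_reg_r with (d1*d1+d2*d2); auto. field_simplify; auto.
    transitivity (e1*(d1*d1+d2*d2)). ring.
    transitivity ((e1*d1+e2*d2)*d1 + d2*(e1*d2-e2*d1)). ring. rewrite H. ring.
  - apply Rmult_eq_reg_r with (d1*d1+d2*d2); auto. field_simplify; auto.
    transitivity (e2*(d1*d1+d2*d2)). ring.
    transitivity ((e1*d1+e2*d2)*d2 - d1*(e1*d2-e2*d1)). ring. rewrite H. ring.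
Qed.

Lemma circ u1 u2 v1 v2 w1 w2 q1 q2 :
  on_circle_through (u1,u2) (v1,v2) (w1,w2) (q1,q2) ->
  ((u1-q1)^2+(u2-q2)^2)*((v1-q1)*(w2-q2)-(v2-q2)*(w1-q1)) +
  ((v1-q1)^2+(v2-q2)^2)*((w1-q1)*(u2-q2)-(w2-q2)*(u1-q1)) +
  ((w1-q1)^2+(w2-q2)^2)*((u1-q1)*(v2-q2)-(u2-q2)*(v1-q1)) = 0.
Proof.
  intros [_ [[o1 o2] [h1 [h2 h3]]]]. unfold dist2 in *; simpl in *.
  set (Eu := (o1-u1)^2+(o2-u2)^2 - ((o1-q1)^2+(o2-q2)^2)).
  set (Ev := (o1-v1)^2+(o2-v2)^2 - ((o1-q1)^2+(o2-q2)^2)).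
  set (Ew := (o1-w1)^2+(o2-w2)^2 - ((o1-q1)^2+(o2-q2)^2)).
  assert (Eu = 0) by (unfold Eu; lra).
  assert (Ev = 0) by (unfold Ev; lra).
  assert (Ew = 0) by (unfold Ew; lra).
  transitivity (Eu*((v1-q1)*(w2-q2)-(v2-q2)*(w1-q1)) + Ev*((w1-q1)*(u2-q2)-(w2-q2)*(u1-q1))
    + Ew*((u1-q1)*(v2-q2)-(u2-q2)*(v1-q1))).
  { unfold Eu, Ev, Ew. ring. }
  rewrite H, H0, H1. ring.
Qed.

Lemma pair_cond (c1 c2 x1 x2 y1 y2 p1 p2 ea1 ea2 eb1 eb2 : R) :
  ((c1-p1)^2+(c2-p2)^2)*((x1-p1)*(y2-p2)-(x2-p2)*(y1-p1)) +
  ((x1-p1)^2+(x2-p2)^2)*((y1-p1)*(c2-p2)-(y2-p2)*(c1-p1)) +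
  ((y1-p1)^2+(y2-p2)^2)*((c1-p1)*(x2-p2)-(c2-p2)*(x1-p1)) = 0 ->
  ea1*(x2-c2) - ea2*(x1-c1) = 0 -> eb1*(y2-c2) - eb2*(y1-c1) = 0 ->
  ~(x1-c1 = 0 /\ x2-c2 = 0) -> ~(y1-c1 = 0 /\ y2-c2 = 0) ->
  ((x1-p1)*ea1+(x2-p2)*ea2)*(eb1*(y2-p2)-eb2*(y1-p1))
   - (ea1*(x2-p2)-ea2*(x1-p1))*((y1-p1)*eb1+(y2-p2)*eb2) = 0.
Proof.
  intros K H1 H2 N1 N2.
  destruct (par _ _ _ _ H1 N1) as [m [-> ->]].
  destruct (par _ _ _ _ H2 N2) as [n [-> ->]].
  rewrite <- (Rmult_0_r (m*n)). rewrite <- K. ring.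
Qed.

Lemma eq0_by a b : a = b -> b = 0 -> a = 0.
Proof. intros -> ->; reflexivity. Qed.

Lemma neg_of a b : a + b = 0 -> a = -b.
Proof. intros; lra. Qed.
Lemma neg0 a : -a = 0 -> a = 0.
Proof. intros; lra. Qed.

Lemma prod_contra a b c : 0 < a*b*c -> 0 <= a -> 0 <= b -> c <= 0 -> False.
Proof. intros. assert (0 <= a*b) by (apply Rmult_le_pos; auto). nra. Qed.
Lemma ss_pos a b : 0 < -a * -b -> 0 < a -> 0 < b.
Proof. intros. nra. Qed.
Lemma ss_neg a b : 0 < -a * -b -> a < 0 -> b < 0.
Proof. intros. nra. Qed.

Lemma div_negneg a b : a < 0 -> b < 0 -> 0 < a/b.
Proof. intros. replace (a/b) with ((-a)/(-b)) by (field; lra). apply Rdiv_lt_0_compat; lra. Qed.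

Lemma pos_l x y : 0 < x*y -> 0 < y -> 0 < x.
Proof. intros. nra. Qed.

Theorem lemma1 (A B C P X Y Z : point) :
  ~ collinear A B C ->
  ~ on_line B C P -> ~ on_line C A P -> ~ on_line A B P ->
  miquel_triangle A B C P X Y Z ->
  ~ collinear X Y Z ->
  (in_interior A B C P -> in_interior X Y Z P) /\
  (in_exterior A B C P -> in_exterior X Y Z P).
Proof.
  destruct A as [a1 a2], B as [b1 b2], C as [c1 c2], P as [p1 p2],
    X as [x1 x2], Y as [y1 y2], Z as [z1 z2].
  intros HS HPa HPb HPc [HX [HY [HZ [CA [CB CC]]]]] HXYZ.
  pose proof (circ _ _ _ _ _ _ _ _ CA) as KA.
  pose proof (circ _ _ _ _ _ _ _ _ CB) as KB.
  pose proof (circ _ _ _ _ _ _ _ _ CC) as KC.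
  destruct CA as [nA _]. destruct CB as [nB _]. destruct CC as [nC _].
  revert KA KB KC.
  unfold in_interior, in_exterior, in_closed_triangle, on_line, collinear, cross in *.
  simpl in *. intros KA KB KC.
  set (S := (b1 - a1) * (c2 - a2) - (b2 - a2) * (c1 - a1)) in *.
  assert (NXC : ~(x1-c1 = 0 /\ x2-c2 = 0)).
  { intros [h1 h2]. apply nC. rewrite h1, h2. ring. }
  assert (NYC : ~(y1-c1 = 0 /\ y2-c2 = 0)).
  { intros [h1 h2]. apply nC. rewrite h1, h2. ring. }
  assert (NYA : ~(y1-a1 = 0 /\ y2-a2 = 0)).
  { intros [h1 h2]. apply nA. rewrite h1, h2. ring. }
  assert (NZA : ~(z1-a1 = 0 /\ z2-a2 = 0)).
  { intros [h1 h2]. apply nA. rewrite h1, h2. ring. }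
  assert (NZB : ~(z1-b1 = 0 /\ z2-b2 = 0)).
  { intros [h1 h2]. apply nB. rewrite h1, h2. ring. }
  assert (NXB : ~(x1-b1 = 0 /\ x2-b2 = 0)).
  { intros [h1 h2]. apply nB. rewrite h1, h2. ring. }
  assert (PC := pair_cond c1 c2 x1 x2 y1 y2 p1 p2 (c1-b1) (c2-b2) (a1-c1) (a2-c2) KC
     ltac:(eapply eq0_by; [|exact HX]; ring) ltac:(eapply eq0_by; [|exact HY]; ring) NXC NYC).
  assert (PA := pair_cond a1 a2 y1 y2 z1 z2 p1 p2 (a1-c1) (a2-c2) (b1-a1) (b2-a2) KA
     ltac:(eapply eq0_by; [|exact HY]; ring) ltac:(eapply eq0_by; [|exact HZ]; ring) NYA NZA).
  assert (PB := pair_cond b1 b2 z1 z2 x1 x2 p1 p2 (b1-a1) (b2-a2) (c1-b1) (c2-b2) KB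
     ltac:(eapply eq0_by; [|exact HZ]; ring) ltac:(eapply eq0_by; [|exact HX]; ring) NZB NXB).
  set (ta := (c1-b1)*(x2-p2) - (c2-b2)*(x1-p1)).
  set (tb := (a1-c1)*(y2-p2) - (a2-c2)*(y1-p1)).
  set (tc := (b1-a1)*(z2-p2) - (b2-a2)*(z1-p1)).
  set (pa := (c1 - b1) * (p2 - b2) - (c2 - b2) * (p1 - b1)) in *.
  set (pb := (a1 - c1) * (p2 - c2) - (a2 - c2) * (p1 - c1)) in *.
  set (pc := (b1 - a1) * (p2 - a2) - (b2 - a2) * (p1 - a1)) in *.
  assert (Ta : ta + pa = 0) by (eapply eq0_by; [|exact HX]; unfold ta, pa; ring).
  assert (Tb : tb + pb = 0) by (eapply eq0_by; [|exact HY]; unfold tb, pb; ring).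
  assert (Tc : tc + pc = 0) by (eapply eq0_by; [|exact HZ]; unfold tc, pc; ring).
  assert (Ta' := neg_of _ _ Ta). assert (Tb' := neg_of _ _ Tb). assert (Tc' := neg_of _ _ Tc). clear Ta Tb Tc.
  assert (Sab : (c1-b1)*(a2-c2)-(c2-b2)*(a1-c1) = S) by (unfold S; ring).
  assert (Sbc : (a1-c1)*(b2-a2)-(a2-c2)*(b1-a1) = S) by (unfold S; ring).
  assert (Sca : (b1-a1)*(c2-b2)-(b2-a2)*(c1-b1) = S) by (unfold S; ring).
  assert (Hta : ta <> 0) by (rewrite Ta'; intro h; apply HPa; apply neg0; exact h).
  assert (Htb : tb <> 0) by (rewrite Tb'; intro h; apply HPb; apply neg0; exact h).
  assert (Htc : tc <> 0) by (rewrite Tc'; intro h; apply HPc; apply neg0; exact h).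
  pose proof (core (x1-p1) (x2-p2) (y1-p1) (y2-p2) (c1-b1) (c2-b2) (a1-c1) (a2-c2) PC
     Hta Htb ltac:(rewrite Sab; auto)) as G1.
  pose proof (core (y1-p1) (y2-p2) (z1-p1) (z2-p2) (a1-c1) (a2-c2) (b1-a1) (b2-a2) PA
     Htb Htc ltac:(rewrite Sbc; auto)) as G2.
  pose proof (core (z1-p1) (z2-p2) (x1-p1) (x2-p2) (b1-a1) (b2-a2) (c1-b1) (c2-b2) PB
     Htc Hta ltac:(rewrite Sca; auto)) as G3.
  clear KA KB KC PA PB PC HX HY HZ nA nB nC NXC NYC NYA NZA NZB NXB.
  rewrite Sab in G1. rewrite Sbc in G2. rewrite Sca in G3.
  fold ta tb tc in G1, G2, G3.
  set (kxy := (x1 - p1) * (y2 - p2) - (x2 - p2) * (y1 - p1)) in *.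
  set (kyz := (y1 - p1) * (z2 - p2) - (y2 - p2) * (z1 - p1)) in *.
  set (kzx := (z1 - p1) * (x2 - p2) - (z2 - p2) * (x1 - p1)) in *.
  set (T := (y1 - x1) * (z2 - x2) - (y2 - x2) * (z1 - x1)) in *.
  assert (ET : T = kxy + kyz + kzx) by (unfold T, kxy, kyz, kzx; ring).
  split.
  - intros [al [be [ga [Ha [Hb [Hc [Hs [E1 E2]]]]]]]].
    assert (Pa : pa = al * S).
    { unfold pa, S. rewrite E1, E2. replace ga with (1-al-be) by lra. ring. }
    assert (Pb : pb = be * S).
    { unfold pb, S. rewrite E1, E2. replace ga with (1-al-be) by lra. ring. }
    assert (Pc : pc = ga * S).
    { unfold pc, S. rewrite E1, E2. replace ga with (1-al-be) by lra. ring. }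
    rewrite Ta', Tb', Tc', Pa, Pb, Pc in *.
    assert (S2 : 0 < S*S) by (apply Rsqr_pos_lt; auto).
    assert (K1 : 0 < kxy * S).
    { apply pos_l with (S*S*al*be).
      replace (kxy*S*(S*S*al*be)) with (kxy*S*(-(al*S))*(-(be*S))) by ring. auto.
      apply Rmult_lt_0_compat; [apply Rmult_lt_0_compat|]; auto. }
    assert (K2 : 0 < kyz * S).
    { apply pos_l with (S*S*be*ga).
      replace (kyz*S*(S*S*be*ga)) with (kyz*S*(-(be*S))*(-(ga*S))) by ring. auto.
      apply Rmult_lt_0_compat; [apply Rmult_lt_0_compat|]; auto. }
    assert (K3 : 0 < kzx * S).
    { apply pos_l with (S*S*ga*al).
      replace (kzx*S*(S*S*ga*al)) with (kzx*S*(-(ga*S))*(-(al*S))) by ring. auto.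
      apply Rmult_lt_0_compat; [apply Rmult_lt_0_compat|]; auto. }
    assert (TS : 0 < T*S) by (rewrite ET; lra).
    assert (TN : T <> 0) by (intro h; rewrite h in TS; lra).
    exists (kyz/T), (kzx/T), (kxy/T).
    assert (Q : forall k, 0 < k*S -> 0 < k/T).
    { intros k hk. replace (k/T) with ((k*S)/(T*S)) by (field; split; auto).
      apply Rdiv_lt_0_compat; auto. }
    repeat split; try (apply Q; auto).
    + field_simplify; auto. rewrite ET. field. rewrite <- ET. auto.
    + apply Rmult_eq_reg_r with T; auto. field_simplify; auto.
      unfold kxy, kyz, kzx, T. ring.
    + apply Rmult_eq_reg_r with T; auto. field_simplify; auto.
      unfold kxy, kyz, kzx, T. ring.
  - intros Hext [al [be [ga [Ha [Hb [Hc [Hs [E1 E2]]]]]]]].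
    apply Hext.
    assert (Kyz : kyz = al * T).
    { unfold kyz, T. rewrite E1, E2. replace ga with (1-al-be) by lra. ring. }
    assert (Kzx : kzx = be * T).
    { unfold kzx, T. rewrite E1, E2. replace ga with (1-al-be) by lra. ring. }
    assert (Kxy : kxy = ga * T).
    { unfold kxy, T. rewrite E1, E2. replace ga with (1-al-be) by lra. ring. }
    rewrite Kyz, Kzx, Kxy in *.
    assert (F1 : 0 < ta*tc).
    { assert (h := Rmult_lt_0_compat _ _ G1 G2).
      replace ((ga*T)*S*ta*tb*((al*T)*S*tb*tc)) with ((ga*al)*((T*S*tb)^2)*(ta*tc)) in h by ring.
      destruct (Rlt_or_le 0 (ta*tc)); auto. exfalso.
      eapply prod_contra; [exact h|apply Rmult_le_pos; auto|apply sq_nn|auto]. }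
    assert (F2 : 0 < tb*ta).
    { assert (h := Rmult_lt_0_compat _ _ G2 G3).
      replace ((al*T)*S*tb*tc*((be*T)*S*tc*ta)) with ((al*be)*((T*S*tc)^2)*(tb*ta)) in h by ring.
      destruct (Rlt_or_le 0 (tb*ta)); auto. exfalso.
      eapply prod_contra; [exact h|apply Rmult_le_pos; auto|apply sq_nn|auto]. }
    assert (F3 : 0 < tc*tb).
    { assert (h := Rmult_lt_0_compat _ _ G3 G1).
      replace ((be*T)*S*tc*ta*((ga*T)*S*ta*tb)) with ((be*ga)*((T*S*ta)^2)*(tc*tb)) in h by ring.
      destruct (Rlt_or_le 0 (tc*tb)); auto. exfalso.
      eapply prod_contra; [exact h|apply Rmult_le_pos; auto|apply sq_nn|auto]. }
    assert (Sum : pa + pb + pc = S) by (unfold pa, pb, pc, S; ring).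
    rewrite Ta', Tb', Tc' in *.
    assert (Q : 0 < pa/S /\ 0 < pb/S /\ 0 < pc/S).
    { destruct (Rlt_or_le 0 pa) as [h|h].
      - assert (0 < pb) by (apply (ss_pos pa pb); [|auto]; rewrite Rmult_comm; auto).
        assert (0 < pc) by (apply (ss_pos pa pc); auto). assert (0 < S) by lra.
        repeat split; apply Rdiv_lt_0_compat; auto.
      - assert (pa < 0) by (destruct h; auto; exfalso; apply HPa; auto).
        assert (pb < 0) by (apply (ss_neg pa pb); [|auto]; rewrite Rmult_comm; auto).
        assert (pc < 0) by (apply (ss_neg pa pc); auto). assert (S < 0) by lra.
        repeat split; apply div_negneg; auto. }
    destruct Q as [Q1 [Q2 Q3]].
    exists (pa/S), (pb/S), (pc/S).
    repeat split; try lra.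
    + field_simplify; auto. rewrite Sum. field. auto.
    + apply Rmult_eq_reg_r with S; auto. field_simplify; auto.
      unfold pa, pb, pc, S. ring.
    + apply Rmult_eq_reg_r with S; auto. field_simplify; auto.
      unfold pa, pb, pc, S. ring.
Qed.
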